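(* There exists a smallest (for inclusion) shell-complete category of cubes.
   Context: $[0]=\{()\}$, $[n]=\{0,1\}^n$ ($n\ge1$) with the product order; ${\rm PoSet}$ is posets with strictly increasing maps. Face maps $\delta_i^\alpha:[n-1]\to[n]$ insert $\alpha\in\{0,1\}$ at position $i$; $\square$ is the subcategory of ${\rm PoSet}$ with objects $[n]$ generated by face maps. A map $[m]\to[n]$ is adjacency-preserving if strictly increasing and sends pairs at Hamming distance $1$ to pairs at Hamming distance $1$. A category of cubes is a subcategory $\mathcal A\subset{\rm PoSet}$ with objects $\{[n]:n\ge0\}$, containing $\square$, whose morphisms are adjacency-preserving. An $\mathcal A$-set is a presheaf on $\mathcal A$, $\mathcal A[p]=\mathcal A(-,[p])$, and $\mathrm{cosk}_1^{\mathcal A}$ is the right adjoint of the truncation $K\mapsto K_{\le1}$ to presheaves on the full subcategory on $[0],[1]$. $\mathcal A$ is shell-complete if for every $p\ge2$ the canonical map $\mathcal A[p]\to\mathrm{cosk}_1^{\mathcal A}(\mathcal A[p]_{\le1})$ is an isomorphism. *)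

(* Defs.v *)
From mathcomp Require Import all_boot.
Set Implicit Arguments. Unset Strict Implicit. Unset Printing Implicit Defensive.

Definition cube (n : nat) := {ffun 'I_n -> bool}.

(* A candidate morphism [m] -> [n]: any map of underlying sets. *)
Definition cmap (m n : nat) := {ffun cube m -> cube n}.

Definition cle n (x y : cube n) : bool := [forall i, x i ==> y i].
Definition clt n (x y : cube n) : bool := cle x y && (x != y).

Definition hdist n (x y : cube n) : nat := #|[set i | x i != y i]|.

Definition strictly_increasing m n (f : cmap m n) : Prop :=
  forall x y, clt x y -> clt (f x) (f y).

Definition adjacency_preserving m n (f : cmap m n) : Prop :=
  strictly_increasing f /\
  forall x y, hdist x y = 1 -> hdist (f x) (f y) = 1.

Definition cid n : cmap n n := [ffun x => x].
Definition ccomp k l n (g : cmap l n) (f : cmap k l) : cmap k n :=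
  [ffun x => g (f x)].

(* Face map delta_i^a : [n] -> [n+1], inserting a at position i (i : 'I_(n+1)). *)
Definition face n (i : 'I_n.+1) (a : bool) : cmap n n.+1 :=
  [ffun x : cube n => [ffun j : 'I_n.+1 =>
      match unlift i j with Some k => x k | None => a end]].

Definition cube_family := forall m n : nat, cmap m n -> Prop.

(* A is a category of cubes: a subcategory of PoSet on the objects [n]
   (closed under identities and composition) containing the box category
   (i.e. containing all face maps, which generate it), all of whose
   morphisms are adjacency-preserving. *)
Definition category_of_cubes (A : cube_family) : Prop :=
  [/\ (forall n, A n n (cid n)),
      (forall k l n (g : cmap l n) (f : cmap k l),
          A l n g -> A k l f -> A k n (ccomp g f)),
      (forall n (i : 'I_n.+1) (a : bool), A n n.+1 (face i a)) &
      (forall m n (f : cmap m n), A m n f -> adjacency_preserving f)].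

(* Morphisms of truncated presheaves A[n]_{<=1} -> A[p]_{<=1}, where A[n] is
   the representable presheaf A(-,[n]): components phi_k for k = 0,1, sending
   A([k],[n]) into A([k],[p]), natural w.r.t. every morphism g : [k] -> [l]
   of A with k,l <= 1.  (Values of phi outside A([k],[n]) are irrelevant.) *)
Definition trunc_transfo (A : cube_family) (n p : nat)
    (phi : forall k, cmap k n -> cmap k p) : Prop :=
  (forall k (x : cmap k n), k <= 1 -> A k n x -> A k p (phi k x)) /\
  (forall k l (g : cmap k l) (x : cmap l n), k <= 1 -> l <= 1 ->
      A k l g -> A l n x -> phi k (ccomp x g) = ccomp (phi l x) g).

(* The canonical map A[p]_n = A([n],[p]) -> cosk_1(A[p]_{<=1})_n
   = Hom(A[n]_{<=1}, A[p]_{<=1}), f |-> (x |-> f o x), is a bijection. *)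
Definition canonical_bijective (A : cube_family) (n p : nat) : Prop :=
  (forall f1 f2 : cmap n p, A n p f1 -> A n p f2 ->
     (forall k (x : cmap k n), k <= 1 -> A k n x -> ccomp f1 x = ccomp f2 x) ->
     f1 = f2) /\
  (forall phi : forall k, cmap k n -> cmap k p, @trunc_transfo A n p phi ->
     exists2 f : cmap n p, A n p f &
       forall k (x : cmap k n), k <= 1 -> A k n x -> phi k x = ccomp f x).

(* Shell-complete: for every p >= 2, A[p] -> cosk_1(A[p]_{<=1}) is an
   isomorphism of A-sets, i.e. bijective in every degree n. *)
Definition shell_complete (A : cube_family) : Prop :=
  forall p, 2 <= p -> forall n, canonical_bijective A n p.

Definition subcategory (A B : cube_family) : Prop :=
  forall m n (f : cmap m n), A m n f -> B m n f.

(* Main.v *)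
Require Import Defs.
From mathcomp Require Import all_boot.
Set Implicit Arguments. Unset Strict Implicit. Unset Printing Implicit Defensive.

Lemma cube0_eq (x y : cube 0) : x = y.
Proof. by apply/ffunP => -[i Hi]. Qed.

Lemma hdist_refl n (x : cube n) : hdist x x = 0.
Proof.
rewrite /hdist; apply/eqP; rewrite cards_eq0; apply/eqP/setP => i.
by rewrite !inE eqxx.
Qed.

Lemma adj_pt n (x : cmap 0 n) : adjacency_preserving x.
Proof.
split=> [u v | u v]; first by rewrite /clt (cube0_eq u v) eqxx andbF.
by rewrite (cube0_eq u v) hdist_refl.
Qed.

Lemma adj_comp k l n (g : cmap l n) (f : cmap k l) :
  adjacency_preserving g -> adjacency_preserving f ->
  adjacency_preserving (ccomp g f).
Proof.
move=> [g1 g2] [f1 f2]; split=> x y H; rewrite !ffunE; auto.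
Qed.

Definition del n (j : 'I_n.+1) (x : cube n.+1) : cube n :=
  [ffun k => x (lift j k)].

Lemma face_del n (j : 'I_n.+1) a (x : cube n.+1) : x j = a -> face j a (del j x) = x.
Proof.
move=> Ha; apply/ffunP => i; rewrite !ffunE.
by case: unliftP => [k ->|->]; rewrite ?ffunE.
Qed.

Lemma del_face n (j : 'I_n.+1) a (x : cube n) : del j (face j a x) = x.
Proof. by apply/ffunP => i; rewrite !ffunE liftK. Qed.

Lemma face_j n (j : 'I_n.+1) a (x : cube n) : face j a x j = a.
Proof. by rewrite !ffunE unlift_none. Qed.

Lemma cle_del n (j : 'I_n.+1) (X Y : cube n.+1) :
  X j = Y j -> cle X Y = cle (del j X) (del j Y).
Proof.
move=> Hj; apply/forallP/forallP => H i.
  by rewrite !ffunE; apply: H.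
case: (unliftP j i) => [k ->|->]; first by have := H k; rewrite !ffunE.
by rewrite Hj implybb.
Qed.

Lemma hdist_del n (j : 'I_n.+1) (X Y : cube n.+1) :
  X j = Y j -> hdist X Y = hdist (del j X) (del j Y).
Proof.
move=> Hj; rewrite /hdist.
have -> : [set i | X i != Y i] = lift j @: [set k | del j X k != del j Y k].
  apply/setP => i; rewrite inE.
  case: (unliftP j i) => [k ->|->].
    by rewrite mem_imset ?inE ?ffunE //; apply: lift_inj.
  rewrite Hj eqxx; apply/esym/negbTE/imsetP => -[k _ /eqP].
  by rewrite (negbTE (neq_lift _ _)).
by rewrite card_imset //; apply: lift_inj.
Qed.

Lemma face_adj n (j : 'I_n.+1) a : adjacency_preserving (face j a).
Proof.
split=> x y.
  rewrite /clt => /andP[H1 H2]; apply/andP; split.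
    by rewrite (@cle_del _ j) ?face_j // !del_face.
  by apply: contra H2 => /eqP E; rewrite -(del_face j a x) E del_face.
by rewrite (@hdist_del _ j) ?face_j // !del_face.
Qed.

Definition bit (b : bool) : cube 1 := [ffun _ => b].

Lemma cube1 (y : cube 1) : y = bit (y ord0).
Proof. by apply/ffunP => i; rewrite ffunE (ord1 i). Qed.

Lemma clt_bit : clt (bit false) (bit true).
Proof.
apply/andP; split; first by apply/forallP => i; rewrite !ffunE.
by apply/eqP => /ffunP/(_ ord0); rewrite !ffunE.
Qed.

Lemma hdist_bit : hdist (bit false) (bit true) = 1.
Proof.
rewrite /hdist.
have -> : [set i | bit false i != bit true i] = setT.
  by apply/setP => i; rewrite !inE !ffunE.
by rewrite cardsT card_ord.
Qed.

Lemma clt1 (u v : cube 1) : clt u v -> u = bit false /\ v = bit true.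
Proof.
case/andP => /forallP/(_ ord0) H1 H2.
rewrite (cube1 u) (cube1 v) in H2 *.
by move: H1 H2; case: (u ord0); case: (v ord0); rewrite ?eqxx.
Qed.

Lemma hdist1_neq n (u v : cube n) : hdist u v = 1 -> u != v.
Proof. by move=> H; apply/eqP => E; move: H; rewrite E hdist_refl. Qed.

Section Cat.
Unset Implicit Arguments.
Variable B : cube_family.
Set Implicit Arguments.
Hypothesis HB : category_of_cubes B.

Lemma pts n (x : cmap 0 n) : B 0 n x.
Proof.
case: HB => Hid Hcomp Hface _.
elim: n x => [|n IH] x.
  have -> : x = cid 0 by apply/ffunP => y; rewrite ffunE; apply: cube0_eq.
  exact: Hid.
set z : cube 0 := [ffun i => false].
have -> : x = ccomp (face ord0 (x z ord0)) [ffun y => del ord0 (x y)].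
  apply/ffunP => y; rewrite ffunE.
  have -> : [ffun y0 => del ord0 (x y0)] y = del ord0 (x y) by rewrite ffunE.
  by rewrite face_del // (cube0_eq y z).
by apply: Hcomp.
Qed.

Lemma edges_aux n (e : cmap 1 n) :
  clt (e (bit false)) (e (bit true)) ->
  hdist (e (bit false)) (e (bit true)) = 1 -> B 1 n e.
Proof.
case: HB => Hid Hcomp Hface _.
elim: n e => [|n IH] e.
  by move=> /andP[_ /eqP []]; apply: cube0_eq.
case: n IH e => [|n] IH e.
  move=> /clt1 [E0 E1] _.
  have -> : e = cid 1.
    apply/ffunP => y; rewrite ffunE; have -> : y = bit (y ord0) by apply: cube1.
    by case: (y ord0).
  exact: Hid.
move=> Hlt Hd.
set u := e (bit false) in Hlt Hd *; set v := e (bit true) in Hlt Hd *.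
set S := [set i | u i != v i].
case: (pickP (predC (mem S))) => [j Hj | H]; last first.
  have HS : S = setT by apply/setP => i; rewrite in_setT; exact: negbFE (H i).
  by move: Hd; rewrite /hdist -/S HS cardsT card_ord.
have Euv : u j = v j by move: Hj; rewrite /= inE negbK => /eqP.
have -> : e = ccomp (face j (u j)) [ffun y => del j (e y)].
  apply/ffunP => y; rewrite ffunE.
  have -> : [ffun y0 => del j (e y0)] y = del j (e y) by rewrite ffunE.
  have -> : y = bit (y ord0) by apply: cube1.
  by case: (y ord0); rewrite face_del.
apply: Hcomp => //; apply: IH; rewrite !ffunE -/u -/v.
  case/andP: Hlt => H1 _; apply/andP; split; first by rewrite -cle_del.
  by apply: hdist1_neq; rewrite -hdist_del.
by rewrite -hdist_del.
Qed.

Lemma edges n (e : cmap 1 n) : adjacency_preserving e -> B 1 n e.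
Proof.
case=> H1 H2; apply: edges_aux; [exact: H1 clt_bit | exact: H2 hdist_bit].
Qed.

End Cat.

Lemma cle_trans n (x y z : cube n) : cle x y -> cle y z -> cle x z.
Proof.
move=> /forallP H1 /forallP H2; apply/forallP => i.
by apply/implyP => /(implyP (H1 i)) /(implyP (H2 i)).
Qed.

Lemma cle_anti n (x y : cube n) : cle x y -> cle y x -> x = y.
Proof.
move=> /forallP H1 /forallP H2; apply/ffunP => i.
by move: (H1 i) (H2 i); case: (x i); case: (y i).
Qed.

Lemma clt_trans n (x y z : cube n) : clt x y -> clt y z -> clt x z.
Proof.
move=> /andP[H1 H1'] /andP[H2 H2']; apply/andP; split; first exact: cle_trans H2.
apply/eqP => E; move: H1 H1'; rewrite E => H1.
by rewrite (cle_anti H1 H2) eqxx.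
Qed.

Lemma hdist_sym n (x y : cube n) : hdist x y = hdist y x.
Proof. by rewrite /hdist; apply: eq_card => i; rewrite !inE eq_sym. Qed.

Lemma hdist0 n (x y : cube n) : hdist x y <= 0 -> x = y.
Proof.
rewrite leqn0 /hdist cards_eq0 => /eqP E; apply/ffunP => i.
apply/eqP; apply: negbNE; apply/negP => H.
by have := in_set0 i; rewrite -E inE H.
Qed.

Lemma clt_chain n m (h : cube n -> cube m) :
  (forall u v, clt u v -> hdist u v = 1 -> clt (h u) (h v)) ->
  forall x y, clt x y -> clt (h x) (h y).
Proof.
move=> H x y; move: (leqnn (hdist x y)); move: {2}(hdist x y) => d.
elim: d x y => [|d IH] x y Hd Hxy.
  by move: Hxy; rewrite /clt (hdist0 Hd) eqxx andbF.
case/andP: Hxy => Hle Hne.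
have [i Hi] : exists i, x i != y i.
  apply/existsP; apply: contraR Hne => /existsP Hn; apply/eqP/ffunP => i.
  by apply/eqP; apply: negbNE; apply/negP => Hi; apply: Hn; exists i.
have Hxi : x i = false /\ y i = true.
  by move: (forallP Hle i) Hi; case: (x i); case: (y i).
case: Hxi => Hxi Hyi.
set x' : cube n := [ffun k => (k == i) || x k].
have Hxx' : clt x x'.
  apply/andP; split; first by apply/forallP => k; rewrite ffunE; apply/implyP => ->; rewrite orbT.
  by apply/eqP => /ffunP/(_ i); rewrite ffunE eqxx Hxi.
have Hd1 : hdist x x' = 1.
  rewrite /hdist -(cards1 i); apply: eq_card => k; rewrite !inE ffunE.
  by case: (k =P i) => [->|_] /=; rewrite ?Hxi ?eqxx.
have Hle' : cle x' y.
  apply/forallP => k; rewrite ffunE; case: (k =P i) => [->|_] /=; first by rewrite Hyi.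
  exact: (forallP Hle k).
case: (x' =P y) => [E|Hne'].
  by rewrite -E; apply: H.
apply: (clt_trans (H _ _ Hxx' Hd1)); apply: IH; last by apply/andP; split => //; apply/eqP.
rewrite -ltnS; apply: leq_trans Hd; apply: proper_card.
apply/properP; split.
  apply/subsetP => k; rewrite !inE ffunE; case: (k =P i) => [->|_] //=.
exists i; first by rewrite inE.
rewrite !inE ffunE eqxx /= negbK; apply/eqP; exact/esym.
Qed.

Lemma hdist1_clt n (u v : cube n) : hdist u v = 1 -> clt u v \/ clt v u.
Proof.
move=> Hd; have /cards1P [i Hi] : #|[set k | u k != v k]| == 1 by rewrite -/(hdist u v) Hd.
have Hk : forall k, (k == i) = (u k != v k).
  by move=> k; rewrite -in_set1 -Hi inE.
have Hui := Hk i; rewrite eqxx in Hui.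
have Hneq := hdist1_neq Hd.
case Eu: (u i) Hui => Hui.
  right; apply/andP; split; last by rewrite eq_sym.
  apply/forallP => k; case: (k =P i) => [->|/eqP Nk]; first by rewrite Eu implybT.
  by move: (Hk k); rewrite (negbTE Nk) => /esym/negbFE/eqP ->; rewrite implybb.
left; apply/andP; split => //.
apply/forallP => k; case: (k =P i) => [->|/eqP Nk]; first by rewrite Eu.
by move: (Hk k); rewrite (negbTE Nk) => /esym/negbFE/eqP ->; rewrite implybb.
Qed.

Definition emap n (u v : cube n) : cmap 1 n := [ffun y : cube 1 => if y ord0 then v else u].

Lemma emap_adj n (u v : cube n) : clt u v -> hdist u v = 1 ->
  adjacency_preserving (emap u v).
Proof.
move=> H1 H2; split=> y y'.
  by case/clt1 => -> ->; rewrite !ffunE.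
rewrite (cube1 y) (cube1 y') !ffunE.
case: (y ord0); case: (y' ord0); rewrite ?hdist_refl // => _.
by rewrite hdist_sym.
Qed.

Definition Ball : cube_family := fun m n f => adjacency_preserving f.

Definition pt k n (v : cube n) : cmap k n := [ffun _ => v].
Definition z0 : cube 0 := [ffun _ => false].

Lemma Ball_cat : category_of_cubes Ball.
Proof.
split.
- move=> n; split=> x y; rewrite !ffunE //.
- move=> k l n g f; exact: adj_comp.
- move=> n i a; exact: face_adj.
- by [].
Qed.

Lemma Ball_sc n p : canonical_bijective Ball n p.
Proof.
split.
  move=> f1 f2 _ _ H; apply/ffunP => v.
  have := H 0 (pt 0 v) isT (adj_pt _); move/ffunP/(_ z0); rewrite !ffunE //.
move=> phi [T1 T2].
set g : cmap n p := [ffun v => phi 0 (pt 0 v) z0].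
have Hg : forall k (x : cmap k n), k <= 1 -> Ball x -> phi k x = ccomp g x.
  move=> k x Hk Hx; apply/ffunP => y.
  have := T2 0 k (pt 0 y) x isT Hk (adj_pt _) Hx.
  have -> : ccomp x (pt 0 y) = pt 0 (x y) by apply/ffunP => w; rewrite !ffunE.
  move/ffunP/(_ z0); rewrite !ffunE => <-; by [].
clearbody g.
have Hedge : forall u v, clt u v -> hdist u v = 1 ->
    clt (g u) (g v) /\ hdist (g u) (g v) = 1.
  move=> u v H1 H2.
  have := T1 1 (emap u v) isT (emap_adj H1 H2).
  rewrite Hg //; last exact: emap_adj.
  case=> A1 A2; have := A1 _ _ clt_bit; have := A2 _ _ hdist_bit.
  by rewrite !ffunE.
exists g; last exact: Hg.
split; last first.
  move=> u v Hd; case: (hdist1_clt Hd) => H.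
    by case: (Hedge u v H Hd).
  rewrite hdist_sym in Hd; case: (Hedge v u H Hd) => _; by rewrite hdist_sym.
apply: clt_chain => u v H1 H2; by case: (Hedge u v H1 H2).
Qed.

Lemma clt_FT m : clt ([ffun _ => false] : cube m.+1) [ffun _ => true].
Proof.
apply/andP; split; first by apply/forallP => i; rewrite !ffunE.
by apply/eqP => /ffunP/(_ ord0); rewrite !ffunE.
Qed.

Lemma minimal (B : cube_family) : category_of_cubes B -> shell_complete B ->
  subcategory Ball B.
Proof.
move=> HB HS m n f Hf.
have Hadj := HB; case: Hadj => _ _ _ Hadj.
case: n f Hf => [|[|n]] f Hf.
- case: m f Hf => [|m] f Hf; first exact: pts.
  case: Hf => Hf _; have := Hf _ _ (clt_FT m).
  by move=> /andP[_ /eqP []]; apply: cube0_eq.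
- case: m f Hf => [|[|m]] f Hf; first exact: pts.
    exact: edges.
  case: Hf => Hf _.
  set y : cube m.+2 := [ffun k => val k == 0].
  have H1 : clt [ffun _ => false] y.
    apply/andP; split; first by apply/forallP => i; rewrite !ffunE.
    by apply/eqP => /ffunP/(_ ord0); rewrite !ffunE.
  have H2 : clt y [ffun _ => true].
    apply/andP; split; first by apply/forallP => i; rewrite !ffunE implybT.
    by apply/eqP => /ffunP/(_ (Ordinal (isT : 1 < m.+2))); rewrite !ffunE.
  case: (clt1 (Hf _ _ H1)) => _ E1; case: (clt1 (Hf _ _ H2)) => E2 _.
  by move: E1; rewrite E2 => /ffunP/(_ ord0); rewrite !ffunE.
- case: (HS n.+2 isT m) => _ Hsurj.
  have Ht : @trunc_transfo B m n.+2 (fun k (x : cmap k m) => ccomp f x).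
    split.
      move=> k x Hk Hx; have Hx' := adj_comp Hf (Hadj _ _ _ Hx).
      case: k Hk x Hx Hx' => [|[|k]] // _ x _ Hx'; first exact: pts.
      exact: edges.
    by move=> k l g x _ _ _ _; apply/ffunP => w; rewrite !ffunE.
  have [f' Hf' Heq] := Hsurj _ Ht.
  have -> : f = f' => //.
  apply/ffunP => v; have := Heq 0 (pt 0 v) isT (pts HB _).
  by move/ffunP/(_ z0); rewrite !ffunE.
Qed.

Theorem theorem7p8 :
  exists A : cube_family,
    [/\ category_of_cubes A, shell_complete A &
        forall B : cube_family, category_of_cubes B -> shell_complete B ->
          subcategory A B].
Proof.
exists Ball; split.
- exact: Ball_cat.
- by move=> p _ n; apply: Ball_sc.
- exact: minimal.
Qed.
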